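(* Let $\Sigma$ be a ranked alphabet, $B$ a strong bimonoid and $r:T_\Sigma\to B$. The following are equivalent: (i) there is a crisp-deterministic $(\Sigma,B)$-wta $\mathcal{A}$ with $r=[\![\mathcal{A}]\!]^{\mathrm{init}}$; (ii) there is a finite $(\Sigma,B)$-algebra $\mathcal{K}$ with $r=[\![\mathcal{K}]\!]$; (iii) $r$ is a $(\Sigma,B)$-recognizable step mapping in normal form; (iv) $r$ is a $(\Sigma,B)$-recognizable step mapping; (v) $\mathrm{im}(r)$ is finite and for each $b\in B$ the tree language $r^{-1}(b)=\{\xi\in T_\Sigma\mid r(\xi)=b\}$ is recognizable.
   Context: Ranked alphabet $\Sigma$ ($\Sigma^{(0)}\ne\emptyset$), trees $T_\Sigma$; strong bimonoid $(B,\oplus,\otimes,\mathbb{0},\mathbb{1})$ ($(B,\oplus,\mathbb{0})$ commutative monoid, $(B,\otimes,\mathbb{1})$ monoid, $\mathbb{0}\ne\mathbb{1}$, $\mathbb{0}$ absorbing; no distributivity). A tree language $L\subseteq T_\Sigma$ is recognizable if it is accepted by some finite-state tree automaton. A $(\Sigma,B)$-wta $\mathcal{A}=(Q,\delta,F)$: $Q$ finite nonempty, $\delta_k:Q^k\times\Sigma^{(k)}\times Q\to B$, $F:Q\to B$; $h_{\mathrm{V}(\mathcal{A})}(\sigma(\xi_1,\dots,\xi_k))_q=\bigoplus_{q_1,\dots,q_k}\big(\bigotimes_{i=1}^k h_{\mathrm{V}(\mathcal{A})}(\xi_i)_{q_i}\big)\otimes\delta_k(q_1\dots q_k,\sigma,q)$;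 $[\![\mathcal{A}]\!]^{\mathrm{init}}(\xi)=\bigoplus_q h_{\mathrm{V}(\mathcal{A})}(\xi)_q\otimes F_q$. $\mathcal{A}$ is crisp-deterministic if for all $k,\sigma\in\Sigma^{(k)},q_1,\dots,q_k$ there is a unique $q$ with $\delta_k(q_1\dots q_k,\sigma,q)=\mathbb{1}$ and all other values $\delta_k(q_1\dots q_k,\sigma,q')$ are $\mathbb{0}$. A $(\Sigma,B)$-algebra is $\mathcal{K}=(Q,\theta,F)$, $(Q,\theta)$ a $\Sigma$-algebra, $F:Q\to B$; finite if $Q$ finite; $[\![\mathcal{K}]\!]=F\circ h_{\mathcal{K}}$ with $h_{\mathcal{K}}$ the unique homomorphism from the term algebra $T_\Sigma$. For $L\subseteq T_\Sigma$, $\mathbb{1}_{(B,L)}(\xi)=\mathbb{1}$ if $\xi\in L$ and $\mathbb{0}$ otherwise. $r$ is a $(\Sigma,B)$-recognizable step mapping if $r=\bigoplus_{i=1}^n b_i\otimes\mathbb{1}_{(B,L_i)}$ (pointwise) for some $n\ge1$, recognizable $L_1,\dots,L_n\subseteq T_\Sigma$ and $b_1,\dots,b_n\in B$; it is in normal form if moreover $(L_i)_{i\in[n]}$ is a partition of $T_\Sigma$. *)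

(* Defs.v *)
From Stdlib Require List.
From mathcomp Require Import all_boot.
Unset Printing Implicit Defensive.

(* A ranked alphabet is a finite type [Sigma] with a rank function [rk];
   a symbol [s] of rank [rk s] labels nodes with [rk s] children. *)
Inductive tree (Sigma : Type) (rk : Sigma -> nat) : Type :=
  Node (s : Sigma) of ('I_(rk s) -> tree Sigma rk).
Arguments Node {Sigma rk} s _.

Record strong_bimonoid := StrongBimonoid {
  sb_car :> Type;
  sb_add : sb_car -> sb_car -> sb_car;
  sb_mul : sb_car -> sb_car -> sb_car;
  sb_zero : sb_car;
  sb_one : sb_car;
  sb_addA : forall x y z, sb_add x (sb_add y z) = sb_add (sb_add x y) z;
  sb_addC : forall x y, sb_add x y = sb_add y x;
  sb_add0x : forall x, sb_add sb_zero x = x;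
  sb_mulA : forall x y z, sb_mul x (sb_mul y z) = sb_mul (sb_mul x y) z;
  sb_mul1x : forall x, sb_mul sb_one x = x;
  sb_mulx1 : forall x, sb_mul x sb_one = x;
  sb_mul0x : forall x, sb_mul sb_zero x = sb_zero;
  sb_mulx0 : forall x, sb_mul x sb_zero = sb_zero;
  sb_zero_neq_one : sb_zero <> sb_one
}.

Section Defs.
Variables (Sigma : finType) (rk : Sigma -> nat) (B : strong_bimonoid).

Local Notation T := (tree Sigma rk).
Local Notation "x (+) y" := (@sb_add B x y) (at level 50, left associativity).
Local Notation "x (x) y" := (@sb_mul B x y) (at level 40, left associativity).

Record fta := FTA {
  fta_Q : finType;
  fta_delta : forall s : Sigma, {ffun 'I_(rk s) -> fta_Q} -> fta_Q -> bool;
  fta_F : fta_Q -> bool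
}.

Fixpoint fta_reach (A : fta) (t : T) (q : fta_Q A) : Prop :=
  match t with
  | Node s f => exists w : {ffun 'I_(rk s) -> fta_Q A},
      (forall i, fta_reach A (f i) (w i)) /\ fta_delta A s w q
  end.

Definition fta_accepts (A : fta) (t : T) : Prop :=
  exists q, fta_reach A t q /\ fta_F A q.

Definition recognizable (L : T -> Prop) : Prop :=
  exists A : fta, forall t, L t <-> fta_accepts A t.

Record wta := WTA {
  wta_Q : finType;
  wta_Q_nonempty : inhabited wta_Q;
  wta_delta : forall s : Sigma, {ffun 'I_(rk s) -> wta_Q} -> wta_Q -> B;
  wta_F : wta_Q -> B
}.

Fixpoint wta_hV (A : wta) (t : T) (q : wta_Q A) : B :=
  match t with
  | Node s f =>
      \big[@sb_add B / sb_zero B]_(w : {ffun 'I_(rk s) -> wta_Q A})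
        ((\big[@sb_mul B / sb_one B]_(i < rk s) wta_hV A (f i) (w i))
           (x) wta_delta A s w q)
  end.

Definition wta_sem_init (A : wta) (t : T) : B :=
  \big[@sb_add B / sb_zero B]_(q : wta_Q A) (wta_hV A t q (x) wta_F A q).

Definition crisp_deterministic (A : wta) : Prop :=
  forall (s : Sigma) (w : {ffun 'I_(rk s) -> wta_Q A}),
    exists q, wta_delta A s w q = sb_one B /\
              forall q', q' <> q -> wta_delta A s w q' = sb_zero B.

Record sbalg := SBAlg {
  alg_Q : Type;
  alg_theta : forall s : Sigma, ('I_(rk s) -> alg_Q) -> alg_Q;
  alg_F : alg_Q -> B
}.

Fixpoint alg_h (K : sbalg) (t : T) : alg_Q K :=
  match t with Node s f => alg_theta K s (fun i => alg_h K (f i)) end.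

Definition alg_sem (K : sbalg) (t : T) : B := alg_F K (alg_h K t).

Definition finite_alg (K : sbalg) : Prop :=
  exists (e : seq (alg_Q K)), forall x, Stdlib.Lists.List.In x e.

Definition indicator (L : T -> bool) (t : T) : B :=
  if L t then sb_one B else sb_zero B.

Definition step_repr (r : T -> B) (n : nat)
    (b : 'I_n -> B) (L : 'I_n -> T -> bool) : Prop :=
  forall t, r t = \big[@sb_add B / sb_zero B]_(i < n) (b i (x) indicator (L i) t).

Definition rec_step_mapping (r : T -> B) : Prop :=
  exists (n : nat) (b : 'I_n -> B) (L : 'I_n -> T -> bool),
    1 <= n /\ (forall i, recognizable (fun t => L i t)) /\ step_repr r n b L.

Definition is_partition (n : nat) (L : 'I_n -> T -> bool) : Prop :=
  (forall i j t, i <> j -> L i t -> L j t -> False) /\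
  (forall t, exists i, L i t).

Definition rec_step_mapping_nf (r : T -> B) : Prop :=
  exists (n : nat) (b : 'I_n -> B) (L : 'I_n -> T -> bool),
    1 <= n /\ (forall i, recognizable (fun t => L i t)) /\
    is_partition n L /\ step_repr r n b L.

Definition finite_image (r : T -> B) : Prop :=
  exists e : seq B, forall t, Stdlib.Lists.List.In (r t) e.

End Defs.

(* Main.v *)
From HB Require Import structures.
Require Import Defs.
From mathcomp Require Import all_boot.
From Stdlib Require Import ClassicalEpsilon FunctionalExtensionality.
Set Warnings "-notation-overridden".
Set Warnings "-redundant-canonical-projection".

Section Inst.
Variable B : strong_bimonoid.
HB.instance Definition _ := Monoid.isComLaw.Build (sb_car B) (sb_zero B) (@sb_add B)
  (@sb_addA B) (@sb_addC B) (@sb_add0x B).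
HB.instance Definition _ := Monoid.isLaw.Build (sb_car B) (sb_one B) (@sb_mul B)
  (@sb_mulA B) (@sb_mul1x B) (@sb_mulx1 B).
End Inst.

Definition dec (P : Prop) : bool := if excluded_middle_informative P then true else false.
Lemma decP (P : Prop) : dec P <-> P.
Proof. rewrite /dec; case: excluded_middle_informative => //. Qed.

Section Main.
Variables (Sigma : finType) (rk : Sigma -> nat) (B : strong_bimonoid).
Local Notation T := (tree Sigma rk).
Local Notation add := (@sb_add B).
Local Notation mul := (@sb_mul B).
Local Notation zero := (sb_zero B).
Local Notation one := (sb_one B).

Fixpoint tree_ind' (P : T -> Prop) (H : forall s f, (forall i, P (f i)) -> P (Node s f)) (t : T) : P t :=
  match t with Node s f => H s f (fun i => tree_ind' P H (f i)) end.

Lemma bigmul_zero_seq (I : eqType) (r : seq I) (P : pred I) (F : I -> B) (i0 : I) :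
  i0 \in r -> P i0 -> F i0 = zero -> \big[mul/one]_(i <- r | P i) F i = zero.
Proof.
move=> hr hP h; elim: r hr => [|x r IH] //=.
rewrite in_cons big_cons => /orP [/eqP <-|/IH ->].
  by rewrite hP h sb_mul0x.
by case: (P x); rewrite ?sb_mulx0.
Qed.

Lemma bigmul_zero (n : nat) (F : 'I_n -> B) (i0 : 'I_n) : F i0 = zero ->
  \big[mul/one]_(i < n) F i = zero.
Proof. move=> h; exact: (bigmul_zero_seq _ (index_enum _) (fun _ => true) F i0 (mem_index_enum _) isT h). Qed.

Section Crisp.
Variable (A : wta Sigma rk B).
Variable d : forall s, {ffun 'I_(rk s) -> wta_Q Sigma rk B A} -> wta_Q Sigma rk B A.
Hypothesis hd1 : forall s w, wta_delta Sigma rk B A s w (d s w) = one.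
Hypothesis hd0 : forall s w q, q <> d s w -> wta_delta Sigma rk B A s w q = zero.

Fixpoint drun (t : T) : wta_Q Sigma rk B A :=
  match t with Node s f => d s [ffun i => drun (f i)] end.

Lemma hV_drun t q : wta_hV Sigma rk B A t q = if q == drun t then one else zero.
Proof.
elim/tree_ind': t q => s f IH q /=.
rewrite (bigD1 [ffun i => drun (f i)]) //=.
rewrite [X in add _ X]big1; last first.
  move=> w hw. have [i hi] : exists i, w i != drun (f i).
    apply/existsP. move: hw; apply: contraR. rewrite negb_exists => /forallP h.
    apply/eqP/ffunP => i. rewrite ffunE. by have := h i; rewrite negbK => /eqP.
  rewrite (bigmul_zero _ _ i) ?sb_mul0x // IH (negbTE hi) //.
rewrite Monoid.mulm1 big1; last by move=> i _; rewrite IH ffunE eqxx.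
rewrite sb_mul1x. case: eqP => [->|/hd0] //.
Qed.

Lemma sem_drun t : wta_sem_init Sigma rk B A t = wta_F Sigma rk B A (drun t).
Proof.
rewrite /wta_sem_init (bigD1 (drun t)) //= hV_drun eqxx sb_mul1x big1 ?Monoid.mulm1 //.
move=> q /negbTE hq; rewrite hV_drun hq sb_mul0x //.
Qed.
End Crisp.


Lemma rec_ext (P Q : T -> Prop) : (forall t, P t <-> Q t) ->
  recognizable Sigma rk P -> recognizable Sigma rk Q.
Proof. move=> h [A hA]; exists A => t; rewrite -h; exact: hA. Qed.

Lemma rec_empty (P : T -> Prop) : (forall t, ~ P t) -> recognizable Sigma rk P.
Proof.
move=> h; exists (FTA Sigma rk unit (fun _ _ _ => true) (fun _ => false)) => t.
split => [/h//|[q [_ //]]].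
Qed.

Section FromAlg.
Variable Q : finType.
Hypothesis Qinh : inhabited Q.
Variable theta : forall s, {ffun 'I_(rk s) -> Q} -> Q.
Variable F : Q -> B.
Definition wta_of := WTA Sigma rk B Q Qinh (fun s w q => if q == theta s w then one else zero) F.
Lemma wta_of_crisp : crisp_deterministic Sigma rk B wta_of.
Proof. move=> s w; exists (theta s w); split => [|q' /eqP /negbTE h]; rewrite /= ?eqxx ?h //. Qed.
Lemma wta_of_sem t : wta_sem_init Sigma rk B wta_of t = F (drun wta_of theta t).
Proof.
apply: (sem_drun wta_of theta) => [s w|s w q] /=; first by rewrite eqxx.
by move/eqP/negbTE ->.
Qed.
End FromAlg.

Lemma inP_list (X : eqType) (x : X) (s : seq X) : x \in s -> List.In x s.
Proof. elim: s => [|y s IH] //=; rewrite in_cons => /orP [/eqP ->|/IH]; auto. Qed.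

Lemma in_list_nth (X : Type) (d : X) (s : seq X) x :
  List.In x s -> exists i, i < size s /\ nth d s i = x.
Proof.
elim: s => [|y s IH] //= [->|/IH [i [hi <-]]]; [by exists 0 | by exists i.+1].
Qed.

Arguments in_list_nth {X} d {s x}.

Lemma p1p2 r : (exists A, crisp_deterministic Sigma rk B A /\ r = wta_sem_init Sigma rk B A) ->
  exists K, finite_alg Sigma rk B K /\ r = alg_sem Sigma rk B K.
Proof.
case=> A [hA ->].
pose d s w := proj1_sig (constructive_indefinite_description _ (hA s w)).
have hd1 s w : wta_delta Sigma rk B A s w (d s w) = one.
  by rewrite /d; case: constructive_indefinite_description => q [].
have hd0 s w q : q <> d s w -> wta_delta Sigma rk B A s w q = zero.
  by rewrite /d; case: constructive_indefinite_description => q0 [_ h] /h.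
exists (SBAlg Sigma rk B (wta_Q Sigma rk B A) (fun s g => d s (finfun g)) (wta_F Sigma rk B A)).
split.
  exists (enum (wta_Q Sigma rk B A)) => x; apply: inP_list; by rewrite mem_enum.
apply: functional_extensionality => t.
rewrite (sem_drun A d hd1 hd0) /alg_sem; congr (wta_F _ _ _ _ _).
elim/tree_ind': t => s f IH /=.
congr (d s _); apply/ffunP => i; by rewrite !ffunE IH.
Qed.

Lemma p2p5 (t0 : T) r : (exists K, finite_alg Sigma rk B K /\ r = alg_sem Sigma rk B K) ->
  finite_image Sigma rk B r /\ forall b, recognizable Sigma rk (fun t => r t = b).
Proof.
case=> K [[e He] ->]. split.
  exists (List.map (alg_F Sigma rk B K) e) => t; apply: List.in_map; exact: He.
move=> b.
pose d0 := alg_h Sigma rk B K t0.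
pose ne (i : 'I_(size e)) := nth d0 e i.
pose A := FTA Sigma rk ('I_(size e) : finType)
  (fun s w q => dec (alg_theta Sigma rk B K s (fun j => ne (w j)) = ne q))
  (fun q => dec (alg_F Sigma rk B K (ne q) = b)).
have hex x : exists i : 'I_(size e), ne i = x.
  have [i [hi hx]] := in_list_nth d0 (He x). by exists (Ordinal hi).
have hreach t q : fta_reach Sigma rk A t q <-> ne q = alg_h Sigma rk B K t.
  elim/tree_ind': t q => s f IH q /=. split.
    case=> w [hw /decP <-]. congr (alg_theta _ _ _ _ s _).
    apply: functional_extensionality => j. exact/IH.
  move=> hq.
  pose g i := proj1_sig (constructive_indefinite_description _ (hex (alg_h Sigma rk B K (f i)))).
  have hg i : ne (g i) = alg_h Sigma rk B K (f i).
    by rewrite /g; case: constructive_indefinite_description.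
  exists [ffun i => g i]; split => [i|]; first by apply/IH; rewrite ffunE hg.
  apply/decP; rewrite hq; congr (alg_theta _ _ _ _ s _).
  apply: functional_extensionality => j; by rewrite ffunE hg.
exists A => t; rewrite /alg_sem; split.
  move=> hb. have [q hq] := hex (alg_h Sigma rk B K t).
  exists q; split; [exact/hreach | apply/decP; by rewrite /= hq].
by case=> q [/hreach hq /decP]; rewrite hq.
Qed.

Lemma p5p3 (t0 : T) r : finite_image Sigma rk B r /\ (forall b, recognizable Sigma rk (fun t => r t = b)) ->
  rec_step_mapping_nf Sigma rk B r.
Proof.
case=> [[e He] hrec].
pose d0 := r t0.
pose fo (i : nat) := forall j, j < i -> nth d0 e j <> nth d0 e i.
pose L (i : 'I_(size e)) (t : T) := dec (r t = nth d0 e i /\ fo i).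
have hL i t : L i t <-> r t = nth d0 e i /\ fo i by exact: decP.
have hcov t : exists i, L i t.
  have hex : exists k, dec (k < size e /\ nth d0 e k = r t).
    have [k hk] := in_list_nth d0 (He t). exists k; exact/decP.
  case: (ex_minnP hex) => m /decP [hm hmt] hmin.
  exists (Ordinal hm); apply/hL; split => //= j hj hjm.
  have := hmin j (proj2 (decP _) (conj (ltn_trans hj hm) (etrans hjm hmt))).
  by rewrite leqNgt hj.
have hdisj i j t : i <> j -> L i t -> L j t -> False.
  move=> hij /hL [hi fi] /hL [hj fj].
  case: (ltngtP i j) => h.
  - by apply: (fj i h); rewrite -hi -hj.
  - by apply: (fi j h); rewrite -hi -hj.
  - by apply: hij; apply: val_inj.
exists (size e), (fun i => nth d0 e i), L.
split; first by have [k [hk _]] := in_list_nth d0 (He t0); exact: (leq_ltn_trans (leq0n k) hk).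
split.
  move=> i; case: (excluded_middle_informative (fo i)) => hfo.
    apply: (rec_ext _ _ _ (hrec (nth d0 e i))) => t.
    split => [h|/hL [] //]; apply/hL; by split.
  by apply: rec_empty => t /hL [].
split; first by split.
move=> t; case: (hcov t) => i0 hi0.
rewrite (bigD1 i0) //= /indicator hi0 sb_mulx1 big1 ?Monoid.mulm1.
  by case/hL: hi0.
move=> j /eqP hj; case: ifP => [hjt|_]; last exact: sb_mulx0.
by exfalso; apply: (hdisj j i0 t).
Qed.

Section Subset.
Variables (n : nat) (A : 'I_n -> fta Sigma rk).
Definition Xs := {i : 'I_n & fta_Q Sigma rk (A i)}.
Definition thetaS s (w : {ffun 'I_(rk s) -> {set Xs}}) : {set Xs} :=
  [set x : Xs | [exists v : {ffun 'I_(rk s) -> fta_Q Sigma rk (A (tag x))},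
     [forall j, (Tagged (fun i => fta_Q Sigma rk (A i)) (v j) \in w j)]
     && fta_delta Sigma rk (A (tag x)) s v (tagged x)]].
Variable (Fs : {set Xs} -> B).
Definition WS := wta_of _ (inhabits set0) thetaS Fs.
Lemma runS t x : x \in drun WS thetaS t <-> fta_reach Sigma rk (A (tag x)) t (tagged x).
Proof.
elim/tree_ind': t x => s f IH x /=. rewrite inE. split.
  case/existsP => v /andP [/forallP hv hd]. exists v; split => // j.
  have := hv j; rewrite ffunE => h. exact: (proj1 (IH j (Tagged (fun i => fta_Q Sigma rk (A i)) (v j))) h).
case=> v [hv hd]; apply/existsP; exists v; rewrite hd andbT; apply/forallP => j.
rewrite ffunE; exact: (proj2 (IH j (Tagged (fun i => fta_Q Sigma rk (A i)) (v j))) (hv j)).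
Qed.
End Subset.

Lemma p4p1 r : rec_step_mapping Sigma rk B r ->
  exists A, crisp_deterministic Sigma rk B A /\ r = wta_sem_init Sigma rk B A.
Proof.
case=> n [b [L [_ [hrec hstep]]]].
pose A i := proj1_sig (constructive_indefinite_description _ (hrec i)).
have hA i t : L i t <-> fta_accepts Sigma rk (A i) t.
  by rewrite /A; case: constructive_indefinite_description.
pose F (S : {set Xs n A}) := \big[add/zero]_(i < n) mul (b i)
  (if [exists q : fta_Q Sigma rk (A i), (Tagged (fun i => fta_Q Sigma rk (A i)) q \in S)
        && fta_F Sigma rk (A i) q] then one else zero).
exists (WS n A F); split; first exact: wta_of_crisp.
apply: functional_extensionality => t; rewrite wta_of_sem hstep /F.
apply: eq_bigr => i _; congr (mul _ _); rewrite /indicator.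
have -> : [exists q : fta_Q Sigma rk (A i), (Tagged (fun i => fta_Q Sigma rk (A i)) q \in drun (WS n A F) (thetaS n A) t)
        && fta_F Sigma rk (A i) q] = L i t.
  apply/idP/idP.
    case/existsP => q /andP [hq hf]; apply/hA; exists q; split => //.
    exact: (proj1 (runS n A F t (Tagged (fun i => fta_Q Sigma rk (A i)) q)) hq).
  move/hA => [q [hq hf]]; apply/existsP; exists q; rewrite hf andbT.
  exact: (proj2 (runS n A F t (Tagged (fun i => fta_Q Sigma rk (A i)) q)) hq).
by [].
Qed.

End Main.

Theorem lemma5p3 (Sigma : finType) (rk : Sigma -> nat)
    (hSigma0 : exists s : Sigma, rk s = 0)
    (B : strong_bimonoid) (r : tree Sigma rk -> B) :
  let P1 := exists A : wta Sigma rk B, crisp_deterministic Sigma rk B A /\ r = wta_sem_init Sigma rk B A in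
  let P2 := exists K : sbalg Sigma rk B, finite_alg Sigma rk B K /\ r = alg_sem Sigma rk B K in
  let P3 := rec_step_mapping_nf Sigma rk B r in
  let P4 := rec_step_mapping Sigma rk B r in
  let P5 := finite_image Sigma rk B r /\
            forall b : B, recognizable Sigma rk (fun t => r t = b) in
  (P1 <-> P2) /\ (P1 <-> P3) /\ (P1 <-> P4) /\ (P1 <-> P5).
Proof.
move=> P1 P2 P3 P4 P5.
case: hSigma0 => s0 hs0.
have t0 : tree Sigma rk.
  apply: (Node s0) => i; exfalso; move: (ltn_ord i); move: (nat_of_ord i) => k; by rewrite hs0.
have h12 : P1 -> P2 := @p1p2 Sigma rk B r.
have h25 : P2 -> P5 := @p2p5 Sigma rk B t0 r.
have h53 : P5 -> P3 := @p5p3 Sigma rk B t0 r.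
have h34 : P3 -> P4.
  case=> n [b [L [h1 [h2 [_ h4]]]]]; exists n, b, L; by split.
have h41 : P4 -> P1 := @p4p1 Sigma rk B r.
tauto.
Qed.
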